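(* Let $L\ge 1$ be an integer, let $\sigma^2>0$, and let $\bm{a}:[-1,1]\times[-1,1]\to\mathbb{C}^L$ be a function satisfying $\|\bm{a}(\omega,\mu)\|^2=L$ for all $(\omega,\mu)$. For parameters $x>0$, $\lambda\in[0,1]$, $(\omega,\mu)\in[-1,1]^2$ and $\psi\in[0,2\pi)$, consider the complex Gaussian density on $\mathbb{C}^L$ $$f(\bm{y}\mid x,\lambda,\omega,\mu,\psi)=\frac{1}{(\pi\epsilon^2)^L}\exp\!\Big(-\frac{\|\bm{y}-x\lambda\,\bm{a}(\omega,\mu)e^{\mathrm{j}\psi}\|^2}{\epsilon^2}\Big),\qquad \epsilon^2=x^2(1-\lambda^2)+\sigma^2,$$ i.e. the density of $\mathcal{CN}\big(x\lambda\bm{a}(\omega,\mu)e^{\mathrm{j}\psi},\,\epsilon^2\bm{I}_L\big)$. Fix an observation $\bm{y}\in\mathbb{C}^L$ and write $\bar{\bm{y}}=\bm{y}/\sqrt{L}$ and $\bar{\bm{a}}(\omega,\mu)=\bm{a}(\omega,\mu)/\sqrt{L}$. Let $(\omega_1^*,\mu_1^* )$ be a maximizer of $(\omega,\mu)\mapsto|\bar{\bm{y}}^H\bar{\bm{a}}(\omega,\mu)|^2$ over $[-1,1]^2$, assume $\bar{\bm{y}}^H\bar{\bm{a}}(\omega_1^*,\mu_1^* )\neq 0$, and set $\Xi^*=\|\bar{\bm{y}}\|^2-|\bar{\bm{y}}^H\bar{\bm{a}}(\omega_1^*,\mu_1^* )|^2-\sigma^2$. Define $x_1^*>0$, $\lambda_1^*\in[0,1]$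 and $\psi^*$ by $$(x_1^* )^2=\begin{cases}\|\bar{\bm{y}}\|^2-\sigma^2,&\Xi^*\ge 0,\\ |\bar{\bm{y}}^H\bar{\bm{a}}(\omega_1^*,\mu_1^* )|^2,&\Xi^*<0,\end{cases}\qquad (\lambda_1^* )^2=\begin{cases}\dfrac{|\bar{\bm{y}}^H\bar{\bm{a}}(\omega_1^*,\mu_1^* )|^2}{\|\bar{\bm{y}}\|^2-\sigma^2},&\Xi^*\ge 0,\\ 1,&\Xi^*<0,\end{cases}$$ $$e^{-\mathrm{j}\psi^*}=\frac{\bar{\bm{y}}^H\bar{\bm{a}}(\omega_1^*,\mu_1^* )}{|\bar{\bm{y}}^H\bar{\bm{a}}(\omega_1^*,\mu_1^* )|}.$$ Then $(x_1^*,\lambda_1^*,\omega_1^*,\mu_1^*,\psi^* )$ maximizes $\ln f(\bm{y}\mid x,\lambda,\omega,\mu,\psi)$ over all $x>0$, $\lambda\in[0,1]$, $(\omega,\mu)\in[-1,1]^2$, $\psi\in[0,2\pi)$.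
   Context: This is the maximum-likelihood estimation of the unknown parameters of a ground-to-air Rician channel under the hypothesis that the received (matched-filtered) training signal comes from an unknown attacker: $\bm{y}=x\,(\lambda\bm{a}(\omega,\mu)+\sqrt{1-\lambda^2}\,\bm{h})e^{\mathrm{j}\psi}+\bm{n}$ with $\bm{h}\sim\mathcal{CN}(\bm{0},\bm{I}_L)$ and $\bm{n}\sim\mathcal{CN}(\bm{0},\sigma^2\bm{I}_L)$ independent, which gives the density above. Here $\bm{a}(\omega,\mu)$ is the array steering vector, $\lambda=\sqrt{1/(1+\kappa)}$ with $\kappa$ the Rician factor, $x$ is the received amplitude, $\psi$ a phase rotation, and $(\cdot)^H$ denotes conjugate transpose. *)

(* Defs.v *)
From HB Require Import structures.
From mathcomp Require Import all_boot all_order all_algebra.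
From mathcomp Require Import complex.
Import ComplexField.Normc.
From mathcomp Require Import reals.
From mathcomp.analysis Require Import sequences exp trigo.
Set Implicit Arguments. Unset Strict Implicit. Unset Printing Implicit Defensive.
Import Order.TTheory GRing.Theory Num.Theory.
Local Open Scope ring_scope.
Local Open Scope complex_scope.

Section Defs.
Variables (R : realType) (L : nat).

Definition cdot (u v : 'cV[R[i]]_L) : R[i] := \sum_(k < L) (u k 0)^* * v k 0.

Definition vnorm2 (u : 'cV[R[i]]_L) : R := \sum_(k < L) normc (u k 0) ^+ 2.

Definition expj (psi : R) : R[i] := Complex (cos psi) (sin psi).

Definition eps2 (sigma2 x lam : R) : R := x ^+ 2 * (1 - lam ^+ 2) + sigma2.

Definition fdens (sigma2 : R) (a : R -> R -> 'cV[R[i]]_L) (y : 'cV[R[i]]_L)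
    (x lam om mu psi : R) : R :=
  ((pi * eps2 sigma2 x lam) ^+ L)^-1 *
  expR (- (vnorm2 (y - (((x * lam)%:C * expj psi) *: a om mu)))
          / eps2 sigma2 x lam).

Definition nrmz (u : 'cV[R[i]]_L) : 'cV[R[i]]_L := ((Num.sqrt (L%:R : R))^-1)%:C *: u.

Definition Xistar (sigma2 : R) (a : R -> R -> 'cV[R[i]]_L) (y : 'cV[R[i]]_L) (om1 mu1 : R) : R :=
  vnorm2 (nrmz y) - normc (cdot (nrmz y) (nrmz (a om1 mu1))) ^+ 2 - sigma2.

Definition xstar (sigma2 : R) (a : R -> R -> 'cV[R[i]]_L) (y : 'cV[R[i]]_L) (om1 mu1 : R) : R :=
  if 0 <= Xistar sigma2 a y om1 mu1
  then Num.sqrt (vnorm2 (nrmz y) - sigma2)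
  else Num.sqrt (normc (cdot (nrmz y) (nrmz (a om1 mu1))) ^+ 2).

Definition lamstar (sigma2 : R) (a : R -> R -> 'cV[R[i]]_L) (y : 'cV[R[i]]_L) (om1 mu1 : R) : R :=
  if 0 <= Xistar sigma2 a y om1 mu1
  then Num.sqrt (normc (cdot (nrmz y) (nrmz (a om1 mu1))) ^+ 2 / (vnorm2 (nrmz y) - sigma2))
  else 1.

End Defs.

(* Main.v *)
Require Import Defs.
From HB Require Import structures.
From mathcomp Require Import all_boot all_order all_algebra.
From mathcomp Require Import complex.
Import ComplexField.Normc.
From mathcomp Require Import reals.
From mathcomp.analysis Require Import sequences exp trigo.
From mathcomp Require Import ring lra.
Import Order.TTheory GRing.Theory Num.Theory.
Local Open Scope ring_scope.
Local Open Scope complex_scope.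

Section S.
Variable R : realType.
Lemma normc2 (z : R[i]) : normc z ^+ 2 = complex.Re z ^+ 2 + complex.Im z ^+ 2.
Proof. by case: z => a b /=; rewrite sqr_sqrtr // addr_ge0 // sqr_ge0. Qed.

Lemma term_id (p s q : R[i]) : normc (p - s * q) ^+ 2 =
  normc p ^+ 2 - 2 * complex.Re (s * (p^* * q)) + normc s ^+ 2 * normc q ^+ 2.
Proof.
rewrite !normc2; case: p => a b; case: s => c d; case: q => e f /=.
ring.
Qed.

Lemma Re_sum (L : nat) (F : 'I_L -> R[i]) :
  complex.Re (\sum_(k < L) F k) = \sum_(k < L) complex.Re (F k).
Proof. by apply: (big_morph _ (fun x y => _) (erefl _)) => -[? ?] [? ?]. Qed.

Lemma vnorm2_sub (L : nat) (u v : 'cV[R[i]]_L) s :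
  vnorm2 (u - s *: v) = vnorm2 u - 2 * complex.Re (s * cdot u v) + normc s ^+ 2 * vnorm2 v.
Proof.
rewrite /vnorm2 /cdot mulr_sumr Re_sum mulr_sumr mulr_sumr -sumrB -big_split /=.
by apply: eq_bigr => k _; rewrite !mxE term_id.
Qed.

Lemma vnorm2_scale (L : nat) (r : R) (u : 'cV[R[i]]_L) :
  vnorm2 (r%:C *: u) = r ^+ 2 * vnorm2 u.
Proof.
rewrite /vnorm2 mulr_sumr; apply: eq_bigr => k _; rewrite !mxE !normc2.
case: (u k 0) => p q /=; ring.
Qed.

Lemma cdot_scale (L : nat) (r : R) (u v : 'cV[R[i]]_L) :
  cdot (r%:C *: u) (r%:C *: v) = (r ^+ 2)%:C * cdot u v.
Proof.
rewrite /cdot mulr_sumr; apply: eq_bigr => k _; rewrite !mxE.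
case: (u k 0) => p q; case: (v k 0) => p' q' /=; congr Complex; ring.
Qed.

Lemma Re_scal (u l : R) (w c : R[i]) :
  complex.Re ((u%:C * w) * (l%:C * c)) = u * l * complex.Re (w * c).
Proof. case: w => ? ?; case: c => ? ? /=; ring. Qed.

Lemma normc2_expj (u psi : R) : normc (u%:C * expj psi) ^+ 2 = u ^+ 2.
Proof.
rewrite normc2 /expj /=.
transitivity (u ^+ 2 * (cos psi ^+ 2 + sin psi ^+ 2)); first ring.
by rewrite cos2Dsin2 mulr1.
Qed.

Lemma normc2_expjM (psi : R) c : normc (expj psi * c) ^+ 2 = normc c ^+ 2.
Proof.
rewrite !normc2 /expj; case: c => p q /=.
transitivity ((p ^+ 2 + q ^+ 2) * (cos psi ^+ 2 + sin psi ^+ 2)); first ring.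
by rewrite cos2Dsin2 mulr1.
Qed.

Lemma Re_le (psi r : R) c : 0 <= r -> normc c ^+ 2 <= r ^+ 2 ->
  complex.Re (expj psi * c) <= r.
Proof.
move=> r0 h.
have h1 : complex.Re (expj psi * c) ^+ 2 <= r ^+ 2.
  apply: le_trans h; rewrite -(normc2_expjM psi c) normc2.
  by rewrite lerDl sqr_ge0.
nra.
Qed.

Lemma Re_opt (psi r : R) : complex.Re (expj psi * (expj (- psi) * r%:C)) = r.
Proof.
rewrite /expj cosN sinN /=.
transitivity (r * (cos psi ^+ 2 + sin psi ^+ 2)); first ring.
by rewrite cos2Dsin2 mulr1.
Qed.
Lemma nrmzK (L : nat) (u : 'cV[R[i]]_L) : (0 < L)%N ->
  u = (Num.sqrt (L%:R : R))%:C *: nrmz u.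
Proof.
move=> L0; have s0 : Num.sqrt (L%:R : R) != 0.
  by rewrite gt_eqF // sqrtr_gt0 ltr0n.
by rewrite /nrmz scalerA -rmorphM /= divff // scale1r.
Qed.

Lemma ln_fdens (L : nat) (sigma2 : R) (a : R -> R -> 'cV[R[i]]_L) y x lam om mu psi :
  (0 < L)%N -> vnorm2 (a om mu) = L%:R -> 0 < eps2 sigma2 x lam ->
  ln (fdens sigma2 a y x lam om mu psi) =
  - (L%:R * ln pi) - L%:R * (ln (eps2 sigma2 x lam) +
     (vnorm2 (nrmz y) - 2 * (x * lam) * complex.Re (expj psi * cdot (nrmz y) (nrmz (a om mu)))
       + (x * lam) ^+ 2) / eps2 sigma2 x lam).
Proof.
move=> L0 ha e0.
set e := eps2 sigma2 x lam.
have pe : 0 < pi * e by rewrite mulr_gt0 // pi_gt0.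
rewrite /fdens lnM ?posrE ?invr_gt0 ?exprn_gt0 ?expR_gt0 // lnV ?posrE ?exprn_gt0 //.
rewrite lnXn // expRK lnM ?posrE ?pi_gt0 // vnorm2_sub ha.
have sL2 : Num.sqrt (L%:R : R) ^+ 2 = L%:R by rewrite sqr_sqrtr // ler0n.
have Hy : vnorm2 y = L%:R * vnorm2 (nrmz y).
  by rewrite {1}(nrmzK _ y L0) vnorm2_scale sqr_sqrtr ?ler0n.
have Hc : cdot y (a om mu) = (L%:R)%:C * cdot (nrmz y) (nrmz (a om mu)).
  by rewrite {1}(nrmzK _ y L0) {1}(nrmzK _ (a om mu) L0) cdot_scale sqr_sqrtr ?ler0n.
rewrite Hy Hc Re_scal normc2_expj -mulNrn -mulr_natl /e.
ring.
Qed.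
Lemma ln_le_sub1 (t : R) : 0 < t -> ln t <= t - 1.
Proof.
move=> t0; have := @le_ln1Dx R (t - 1).
have -> : 1 + (t - 1) = t by rewrite addrC subrK.
apply; lra.
Qed.

Lemma opt1 (Y r2 s2 e : R) : 0 < s2 -> s2 <= e -> 0 <= Y - r2 - s2 ->
  ln (Y - r2) + 1 <= ln e + (Y - r2) / e.
Proof.
move=> s0 se h.
have e0 : 0 < e by lra.
have D0 : 0 < Y - r2 by lra.
have := ln_le_sub1 _ (divr_gt0 D0 e0); rewrite ln_div ?posrE //; lra.
Qed.

Lemma opt2 (Y r2 s2 e : R) : 0 < s2 -> s2 <= e -> Y - r2 - s2 < 0 ->
  ln s2 + (Y - r2) / s2 <= ln e + (Y - r2) / e.
Proof.
move=> s0 se h.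
have e0 : 0 < e by lra.
have := ln_le_sub1 _ (divr_gt0 s0 e0); rewrite ln_div ?posrE // => H.
have : 0 <= (s2 - (Y - r2)) * (e - s2) / (e * s2).
  by rewrite divr_ge0 ?mulr_ge0 ?(ltW e0) ?(ltW s0) //; lra.
have -> : (s2 - (Y - r2)) * (e - s2) / (e * s2) =
   (Y - r2) / e - (Y - r2) / s2 - (s2 / e - 1).
  by field; rewrite ?gt_eqF.
lra.
Qed.
End S.
Theorem theorem1 (R : realType) (L : nat) (sigma2 : R)
    (a : R -> R -> 'cV[R[i]]_L) (y : 'cV[R[i]]_L) (om1 mu1 psis : R) :
  (0 < L)%N ->
  0 < sigma2 ->
  (forall om mu, -1 <= om <= 1 -> -1 <= mu <= 1 -> vnorm2 (a om mu) = L%:R) ->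
  (* (om1, mu1) maximizes |ybar^H abar(om,mu)|^2 over [-1,1]^2 *)
  -1 <= om1 <= 1 -> -1 <= mu1 <= 1 ->
  (forall om mu, -1 <= om <= 1 -> -1 <= mu <= 1 ->
     normc (cdot (nrmz y) (nrmz (a om mu))) ^+ 2
       <= normc (cdot (nrmz y) (nrmz (a om1 mu1))) ^+ 2) ->
  cdot (nrmz y) (nrmz (a om1 mu1)) != 0 ->
  (* psi^* : e^{-j psi^*} = ybar^H abar / |ybar^H abar|, psi^* in [0, 2 pi) *)
  0 <= psis < 2 * pi ->
  expj (- psis) = cdot (nrmz y) (nrmz (a om1 mu1))
                    / (normc (cdot (nrmz y) (nrmz (a om1 mu1))))%:C ->
  [/\ 0 < xstar sigma2 a y om1 mu1,
      0 <= lamstar sigma2 a y om1 mu1 <= 1 &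
      forall x lam om mu psi,
        0 < x -> 0 <= lam <= 1 -> -1 <= om <= 1 -> -1 <= mu <= 1 ->
        0 <= psi < 2 * pi ->
        ln (fdens sigma2 a y x lam om mu psi)
          <= ln (fdens sigma2 a y (xstar sigma2 a y om1 mu1)
                   (lamstar sigma2 a y om1 mu1) om1 mu1 psis)].
Proof.
move=> L0 s0 ha hom1 hmu1 hmax hc0 hpsis hexp.
rewrite /xstar /lamstar /Xistar.
set Y := vnorm2 (nrmz y) in hmax *.
set c1 := cdot (nrmz y) (nrmz (a om1 mu1)) in hmax hc0 hexp *.
have r0 : 0 < normc c1.
  rewrite lt_neqAle eq_sym; apply/andP; split.
    by apply/eqP => /eq0_normc h; rewrite h eqxx in hc0.
  by rewrite /normc; case: (c1) => ? ?; exact: sqrtr_ge0.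
set r := normc c1 in hmax hexp r0 *.
have hRe1 : complex.Re (expj psis * c1) = r.
  have rC : r%:C != 0.
    by apply/eqP; case; apply/eqP; rewrite gt_eqF.
  have -> : c1 = expj (- psis) * r%:C by rewrite hexp divfK.
  exact: Re_opt.
have hw : forall om mu psi, -1 <= om <= 1 -> -1 <= mu <= 1 ->
    complex.Re (expj psi * cdot (nrmz y) (nrmz (a om mu))) <= r.
  move=> om mu psi ho hm; apply: Re_le; [exact: ltW | exact: hmax].
have key : forall x lam om mu psi, 0 < x -> 0 <= lam <= 1 ->
    -1 <= om <= 1 -> -1 <= mu <= 1 ->
    sigma2 <= eps2 sigma2 x lam /\
    ln (fdens sigma2 a y x lam om mu psi) <=
      - (L%:R * ln pi) - L%:R * (ln (eps2 sigma2 x lam) + (Y - r ^+ 2) / eps2 sigma2 x lam).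
  move=> x lam om mu psi x0 /andP[l0 l1] ho hm.
  have he : sigma2 <= eps2 sigma2 x lam.
    rewrite /eps2 lerDr; apply: mulr_ge0; [exact: sqr_ge0 | nra].
  split => //.
  rewrite ln_fdens //; [|exact: ha|exact: lt_le_trans he].
  rewrite lerD2l lerN2 ler_pM2l ?ltr0n // lerD2l ler_pM2r ?invr_gt0 ?(lt_le_trans s0 he) //.
  have := hw om mu psi ho hm; have : 0 <= x * lam by rewrite mulr_ge0 // ltW.
  rewrite -/Y; set u := x * lam; set w := complex.Re _ => hu hwr.
  have hrw : 0 <= r - w by rewrite subr_ge0.
  have := mulr_ge0 hu hrw; have := sqr_ge0 (u - r); nra.
split.
- case: ifP => h; rewrite sqrtr_gt0; last exact: exprn_gt0.
  have := exprn_gt0 2 r0; lra.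
- case: ifP => h; last by rewrite ler01 lexx.
  rewrite sqrtr_ge0 /= -sqrtr1 ler_sqrt ?ler01 //.
  have := exprn_gt0 2 r0 => ?.
  rewrite ler_pdivrMr ?mul1r; lra.
move=> x lam om mu psi x0 hl ho hm hp.
have [H1 H2] := key x lam om mu psi x0 hl ho hm.
apply: (le_trans H2).
have rr : 0 < r ^+ 2 := exprn_gt0 2 r0.
case: ifP => h.
  set xs := Num.sqrt (Y - sigma2); set ls := Num.sqrt (r ^+ 2 / (Y - sigma2)).
  have hx2 : xs ^+ 2 = Y - sigma2 by rewrite sqr_sqrtr //; lra.
  have hu : xs * ls = r.
    rewrite /xs /ls -sqrtrM; last lra.
    have -> : (Y - sigma2) * (r ^+ 2 / (Y - sigma2)) = r ^+ 2.
      by field; rewrite gt_eqF //; lra.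
    by rewrite sqrtr_sqr ger0_norm // ltW.
  have he : eps2 sigma2 xs ls = Y - r ^+ 2.
    by rewrite /eps2 mulrBr mulr1 -exprMn hu hx2; ring.
  rewrite ln_fdens //; [| exact: ha | rewrite he; lra].
  rewrite he hu hRe1 lerD2l lerN2 ler_pM2l ?ltr0n //.
  have -> : (Y - 2 * r * r + r ^+ 2) / (Y - r ^+ 2) = 1.
    by field; rewrite gt_eqF //; lra.
  exact: (@opt1 R _ _ _ _ s0 H1 h).
move/negbT: h; rewrite -ltNge => h.
have hx : Num.sqrt (r ^+ 2) = r by rewrite sqrtr_sqr ger0_norm // ltW.
have he : eps2 sigma2 (Num.sqrt (r ^+ 2)) 1 = sigma2.
  by rewrite /eps2 expr1n subrr mulr0 add0r.
rewrite ln_fdens //; [| exact: ha | rewrite he //].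
rewrite he hx mulr1 hRe1 lerD2l lerN2 ler_pM2l ?ltr0n //.
have -> : Y - 2 * r * r + r ^+ 2 = Y - r ^+ 2 by ring.
exact: (@opt2 R _ _ _ _ s0 H1 h).
Qed.
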